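(* Let $A\in\mathfrak g$ have characteristic polynomial equal to a power of an irreducible polynomial. Unless $\mathfrak g=\mathfrak o$ and the characteristic polynomial of $A$ is $x^n$, one has $Q_A\subseteq R_A$. In the remaining case ($\mathfrak g=\mathfrak o$, characteristic polynomial $x^n$), every $v\in Q_A$ still satisfies $\langle A^kv,v\rangle=0$ for all $k\ge1$.
   Context: $\mathbb{K}=\mathbb{F}$ or a quadratic extension of a field $\mathbb{F}$ of characteristic $\neq2$; $V$ an $n$-dimensional $\mathbb{K}$-space with a non-degenerate form which is symmetric ($\mathfrak g=\mathfrak o$), Hermitian ($\mathfrak g=\mathfrak u$) or symplectic ($\mathfrak g=\mathfrak{sp}$); $\mathfrak g=\{A:A^*=-A\}$. $\phi_v$ denotes $u\mapsto\langle u,v\rangle v$. For $A\in\mathfrak g$: $R_A=\{v\in V:\langle A^kv,v\rangle=0\ \forall k\ge0\}$; in the cases $\mathfrak u,\mathfrak{sp}$, $Q_A=\{v\in V:\phi_v\in[A,\mathfrak g]\}$, and in the case $\mathfrak o$, $Q_A=\{v\in V: A\phi_v+\phi_vA\in[A,\mathfrak g]\}$, where $[A,\mathfrak g]=\{AB-BA:B\in\mathfrak g\}$. *)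

(* Defs.v *)
From HB Require Import structures.
From mathcomp Require Import all_boot all_order all_algebra.
Set Implicit Arguments. Unset Strict Implicit. Unset Printing Implicit Defensive.
Import Order.TTheory GRing.Theory Num.Theory.
Local Open Scope ring_scope.

(* The form is <u,v> = u^T J sigma(v), sigma an involutive
   field automorphism of K (the identity in the symmetric/symplectic cases). *)

Inductive form_kind := Ortho | Unitary | Symplectic.

Definition sform (K : fieldType) (n : nat) (sigma : {rmorphism K -> K})
  (J : 'M[K]_n) (u v : 'cV[K]_n) : K :=
  (u^T *m J *m map_mx sigma v) 0 0.

Definition good_form (kind : form_kind) (K : fieldType) (n : nat)
  (sigma : {rmorphism K -> K}) (J : 'M[K]_n) : Prop :=
  (2%:R : K) != 0 /\ J \in unitmx /\
  match kind with
  | Ortho => (forall x, sigma x = x) /\ J^T = J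
  | Symplectic => (forall x, sigma x = x) /\ J^T = - J
  | Unitary => (forall x, sigma (sigma x) = x) /\ (exists x, sigma x != x)
               /\ J^T = map_mx sigma J
  end.

Definition in_g (K : fieldType) (n : nat) (sigma : {rmorphism K -> K})
  (J : 'M[K]_n) (A : 'M[K]_n) : Prop :=
  forall u v, sform sigma J (A *m u) v = - sform sigma J u (A *m v).

(* phi_v : u |-> <u,v> v ; as a matrix: column j is <e_j,v> v *)
Definition phi (K : fieldType) (n : nat) (sigma : {rmorphism K -> K})
  (J : 'M[K]_n) (v : 'cV[K]_n) : 'M[K]_n :=
  \matrix_(i < n, j < n) (sform sigma J (delta_mx j 0) v * v i 0).

Definition in_commutator (K : fieldType) (n : nat) (sigma : {rmorphism K -> K})
  (J : 'M[K]_n) (A M : 'M[K]_n) : Prop :=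
  exists B, in_g sigma J B /\ M = A *m B - B *m A.

Definition R_set (K : fieldType) (n : nat) (sigma : {rmorphism K -> K})
  (J : 'M[K]_n) (A : 'M[K]_n) (v : 'cV[K]_n) : Prop :=
  forall k : nat, sform sigma J ((A ^+ k) *m v) v = 0.

Definition Q_set (kind : form_kind) (K : fieldType) (n : nat)
  (sigma : {rmorphism K -> K}) (J : 'M[K]_n) (A : 'M[K]_n) (v : 'cV[K]_n) : Prop :=
  match kind with
  | Ortho => in_commutator sigma J A (A *m phi sigma J v + phi sigma J v *m A)
  | _ => in_commutator sigma J A (phi sigma J v)
  end.

(* Main.v *)
Require Import Defs.
From HB Require Import structures.
From mathcomp Require Import all_boot all_order all_algebra.
Import Order.TTheory GRing.Theory Num.Theory.
Local Open Scope ring_scope.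
Set Warnings "-all".

Section H.
Variables (K : fieldType) (n : nat) (sigma : {rmorphism K -> K}) (J : 'M[K]_n).

Lemma phiE v : phi sigma J v = v *m (J *m map_mx sigma v)^T.
Proof.
apply/matrixP => i j; rewrite !mxE big_ord1 !mxE mulrC; congr (_ * _).
rewrite /sform -mulmxA mxE (bigD1 j) //= big1 ?addr0.
  by rewrite !mxE eqxx mul1r.
by move=> k /negbTE kj; rewrite !mxE kj mul0r.
Qed.

Lemma tr_phi v (X : 'M[K]_n) : \tr (phi sigma J v *m X) = sform sigma J (X *m v) v.
Proof.
rewrite phiE -mulmxA mxtrace_mulC /sform -mulmxA.
have h (M : 'M[K]_1) : M 0 0 = M^T 0 0 by rewrite mxE.
by rewrite -mulmxA /mxtrace big_ord1 [RHS]h [in RHS]trmx_mul trmxK.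
Qed.

Lemma tr_comm (A B : 'M[K]_n) k : \tr ((A *m B - B *m A) *m A ^+ k) = 0.
Proof.
rewrite mulmxBl linearB /= -mulmxA mxtrace_mulC -mulmxA.
have -> : A ^+ k *m A = A *m A ^+ k.
  by rewrite -[A *m _]/(A * A^+k) -[_ *m A]/(A^+k * A) -exprS exprSr.
by rewrite mulmxA subrr.
Qed.

End H.
Lemma const_nz (K : fieldType) (n : nat) (A : 'M[K]_n) (p : {poly K}) (m : nat)
  (hp : irreducible_poly p) (hchar : char_poly A = p ^+ m) :
  char_poly A != 'X^n -> (char_poly A)`_0 != 0.
Proof.
move=> hX; rewrite -horner_coef0 hchar horner_exp.
have [p0|p0] := eqVneq p.[0] 0; last by rewrite expf_neq0.
exfalso; move/negP: hX; apply.
have hXp : 'X %| p by rewrite -(subr0 'X) -polyC0 -root_factor_theorem /root p0.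
have eXp : 'X %= p by apply: hp.2 => //; rewrite size_polyX.
have e2 : 'X^m %= char_poly A by rewrite hchar; apply: eqp_exp.
rewrite eqp_monic ?monicXn ?char_poly_monic // in e2.
move/eqP: (e2) => e3.
have : size ('X^m : {poly K}) = size (char_poly A) by rewrite e3.
rewrite size_polyXn size_char_poly => -[em].
by rewrite -e3 em.
Qed.

Lemma CH_zero (K : fieldType) (n : nat) (sigma : {rmorphism K -> K}) (J : 'M[K]_n)
  (A : 'M[K]_n) (v : 'cV[K]_n) :
  (char_poly A)`_0 != 0 ->
  (forall k, sform sigma J (A ^+ k.+1 *m v) v = 0) -> sform sigma J v v = 0.
Proof.
move=> c0 hk.
have -> : sform sigma J v v = \tr (phi sigma J v *m 1%:M) by rewrite tr_phi mul1mx.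
case: n J A v c0 hk => [|n'] J A v c0 hk.
  by rewrite /mxtrace big_ord0.
have CH := Cayley_Hamilton A.
rewrite -(coefK (char_poly A)) poly_def rmorph_sum /= in CH.
have : \tr (phi sigma J v *m \sum_(i < size (char_poly A)) horner_mx A ((char_poly A)`_i *: 'X^i)) = 0.
  by rewrite CH mulmx0 linear0.
rewrite mulmx_sumr raddf_sum /= size_char_poly big_ord_recl /=.
rewrite big1 ?addr0.
  rewrite linearZ /= rmorphXn /= expr0 -scalemxAr linearZ /= => /eqP.
  rewrite mulf_eq0 (negbTE c0) /= => /eqP.
  by rewrite -[1%:M]/(1 : 'M_n'.+1).
move=> i _; rewrite linearZ /= rmorphXn /= horner_mx_X -scalemxAr linearZ /=.
by rewrite tr_phi hk mulr0.
Qed.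

Theorem theorem8p3 (kind : form_kind) (K : fieldType) (n : nat)
  (sigma : {rmorphism K -> K}) (J : 'M[K]_n) (A : 'M[K]_n)
  (hform : good_form kind sigma J) (hA : in_g sigma J A)
  (p : {poly K}) (m : nat) (hp : irreducible_poly p)
  (hchar : char_poly A = p ^+ m) :
  (~ (kind = Ortho /\ char_poly A = 'X^n) ->
     forall v : 'cV[K]_n, Q_set kind sigma J A v -> R_set sigma J A v) /\
  (kind = Ortho -> char_poly A = 'X^n ->
     forall v : 'cV[K]_n, Q_set kind sigma J A v ->
       forall k : nat, (1 <= k)%N -> sform sigma J ((A ^+ k) *m v) v = 0).
Proof.
have h2 : (2%:R : K) != 0 by case: hform.
have ortho v : Q_set Ortho sigma J A v -> forall k, sform sigma J (A ^+ k.+1 *m v) v = 0.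
  move=> [B [_ hB]] k.
  have := @tr_comm K n A B k; rewrite -hB mulmxDl linearD /= -mulmxA mxtrace_mulC -mulmxA.
  rewrite -[_ *m A ^+ k *m A]mulmxA.
  have -> : A ^+ k *m A = A ^+ k.+1.
    by rewrite -[_ *m A]/(A^+k * A) -exprSr.
  have -> : A *m A ^+ k = A ^+ k.+1.
    by rewrite -[A *m _]/(A * A^+k) -exprS.
  rewrite -mulr2n tr_phi => /eqP; rewrite -mulr_natr mulf_eq0 (negbTE h2) orbF.
  by move/eqP.
split.
  move=> hnot v; case: kind hform hnot => hform hnot hQ.
  - have hX : char_poly A != 'X^n by apply/eqP => e; apply: hnot.
    case=> [|k]; last exact: ortho.
    rewrite expr0 mul1mx; apply: (@CH_zero K n sigma J A v); last exact: ortho.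
    exact: const_nz hp hchar hX.
  - move=> k; case: hQ => [B [_ hB]].
    by rewrite -tr_phi hB tr_comm.
  - move=> k; case: hQ => [B [_ hB]].
    by rewrite -tr_phi hB tr_comm.
move=> hk _ v hQ [//|k] _.
by subst kind; apply: ortho.
Qed.
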